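(* Let $q>0$ and let $D^*>0$ be the unique positive root of $q-D(F_q+G_q)'(D)/(F_q+G_q)(D)=0$. Then $D^*\ge\sqrt{\max((q-1)/2,0)}$.
   Context: $F_q(y):=\int_0^\infty u^{q-1}e^{yu-u^2/2}\,\mathrm{d}u$ and $G_q(y):=F_q(-y)$ for $y\in\mathbb{R}$. It is known that such a unique positive root $D^*$ exists. Moreover, $\frac{\partial}{\partial D}\frac{D^q}{(F_q+G_q)(D)}>0$ if and only if $D<D^*$, for $D>0$. *)

(* Defs.v *)
From Stdlib Require Import Reals.
From Coquelicot Require Import Coquelicot.
Open Scope R_scope.

(* F_q(y) = \int_0^\infty u^(q-1) e^(y u - u^2/2) du, as an improper (generalized
   Riemann) integral from 0^+ to +oo (the integrand may be singular at 0 when q < 1). *)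
Definition Fq (q y : R) : R :=
  RInt_gen (fun u => Rpower u (q - 1) * exp (y * u - u ^ 2 / 2))
           (at_right 0) (Rbar_locally p_infty).

Definition Gq (q y : R) : R := Fq q (- y).

Definition FGq (q : R) (y : R) : R := Fq q y + Gq q y.

Definition is_root_eq (q D : R) : Prop :=
  q - D * Derive (FGq q) D / FGq q D = 0.

(* Main.v *)
Require Import Defs.
From Stdlib Require Import Reals Lra Psatz Classical.
From Coquelicot Require Import Coquelicot.
Open Scope R_scope.

Definition w (a y u : R) : R := Rpower u a * exp (y * u - u ^ 2 / 2).

Lemma exp_le a b : a <= b -> exp a <= exp b.
Proof. intros H. destruct (Req_dec a b) as [->|H']. lra. left. apply exp_increasing. lra. Qed.

Lemma ln_le_self u : 0 < u -> ln u <= u.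
Proof.
  intros Hu. destruct (Req_dec (ln u) 0) as [E|E]. rewrite E; lra.
  pose proof (exp_ineq1 (ln u) E). rewrite exp_ln in H by lra. lra.
Qed.

Lemma Rpower_derive a u : 0 < u -> is_derive (fun x => Rpower x a) u (a * Rpower u (a - 1)).
Proof. intros Hu. apply is_derive_Reals. now apply derivable_pt_lim_power. Qed.

Lemma w_derive a y u : 0 < u ->
  is_derive (w a y) u (a * Rpower u (a - 1) * exp (y * u - u ^ 2 / 2)
                       + Rpower u a * ((y - u) * exp (y * u - u ^ 2 / 2))).
Proof.
  intros Hu. unfold w.
  apply (is_derive_mult (fun x => Rpower x a) (fun x => exp (y * x - x ^ 2 / 2))).
  - now apply Rpower_derive.
  - auto_derive. auto. replace (y * u + - (u * (u * 1) * / 2)) with (y * u - u ^ 2 / 2) by field. field.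
  - intros; apply Rmult_comm.
Qed.

Lemma w_cont a y u : 0 < u -> continuous (w a y) u.
Proof. intros Hu. apply (ex_derive_continuous (V:=R_NormedModule)). eexists. now apply w_derive. Qed.

Lemma w_pos a y u : 0 < u -> 0 < w a y u.
Proof. intros Hu. unfold w, Rpower. apply Rmult_lt_0_compat; apply exp_pos. Qed.
Lemma exR (f : R -> R) a b : 0 < a -> 0 < b -> (forall u, 0 < u -> continuous f u) -> ex_RInt f a b.
Proof.
  intros Ha Hb Hc. apply (ex_RInt_continuous (V:=R_CompleteNormedModule)). intros z Hz. apply Hc.
  destruct Hz as [Hz _]. eapply Rlt_le_trans; [|exact Hz]. now apply Rmin_case.
Qed.

Lemma ex_gen_bounded (f : R -> R) M : (forall u, 0 < u -> continuous f u) ->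
  (forall u, 0 < u -> 0 <= f u) ->
  (forall a b, 0 < a -> a < b -> RInt f a b <= M) ->
  ex_RInt_gen f (at_right 0) (Rbar_locally p_infty).
Proof.
  intros Hc Hp HM.
  set (S := fun x => exists a b, 0 < a /\ a < b /\ x = RInt f a b).
  assert (Hb : bound S). { exists M. intros x [a [b [H1 [H2 ->]]]]. now apply HM. }
  assert (Hne : exists x, S x). { exists (RInt f 1 2). exists 1, 2. repeat split; lra. }
  destruct (completeness S Hb Hne) as [L [HL1 HL2]].
  exists L. intros P [eps HP].
  assert (Hex : exists a0 b0, 0 < a0 /\ a0 < b0 /\ L - eps < RInt f a0 b0).
  { apply NNPP. intro Hn. assert (L <= L - eps). apply HL2. intros x [a [b [H1 [H2 ->]]]].
    apply Rnot_lt_le. intro. apply Hn. exists a, b. auto.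
    destruct eps; simpl in *; lra. }
  destruct Hex as [a0 [b0 [Ha0 [Hab0 Hlt]]]].
  apply Filter_prod with (fun a => 0 < a < a0) (fun b => b0 < b).
  - exists (mkposreal a0 Ha0). intros y Hy Hy0. split; auto.
    unfold ball in Hy; simpl in Hy; unfold AbsRing_ball, abs, minus, plus, opp in Hy; simpl in Hy.
    apply Rabs_lt_between in Hy. lra.
  - exists b0. auto.
  - intros a b [Ha1 Ha2] Hb0. exists (RInt f a b). split.
    + simpl. apply (RInt_correct (V:=R_CompleteNormedModule)). apply exR; try lra. auto.
    + apply HP. unfold ball; simpl; unfold AbsRing_ball, abs, minus, plus, opp; simpl.
      assert (E1 : RInt f a b = RInt f a a0 + RInt f a0 b0 + RInt f b0 b).
      { rewrite <- (RInt_Chasles f a a0 b) by (apply exR; auto; lra).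
        rewrite <- (RInt_Chasles f a0 b0 b) by (apply exR; auto; lra).
        unfold plus; simpl; ring. }
      assert (0 <= RInt f a a0). { apply RInt_ge_0. lra. apply exR; auto; lra. intros; apply Hp; lra. }
      assert (0 <= RInt f b0 b). { apply RInt_ge_0. lra. apply exR; auto; lra. intros; apply Hp; lra. }
      assert (RInt f a b <= L). { apply HL1. exists a, b. repeat split; lra. }
      apply Rabs_lt_between. destruct eps as [e He]; simpl in *. lra.
Qed.

Lemma w_le_small a y u : 0 < u <= 1 -> w a y u <= exp (Rabs y) * Rpower u a.
Proof.
  intros Hu. unfold w. rewrite Rmult_comm. apply Rmult_le_compat_r.
  unfold Rpower; left; apply exp_pos. apply exp_le.
  assert (y * u <= Rabs y). { destruct (Rle_dec 0 y). rewrite Rabs_right by lra. nra.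
    rewrite Rabs_left by lra. nra. }
  nra.
Qed.

Lemma w_le_big a y u : 1 <= u -> w a y u <= exp ((Rabs a + Rabs y + 1) ^ 2 / 2) * exp (- u).
Proof.
  intros Hu. unfold w, Rpower. rewrite <- !exp_plus. apply exp_le.
  assert (0 <= ln u). { rewrite <- ln_1. apply ln_le; lra. }
  pose proof (ln_le_self u ltac:(lra)).
  assert (a * ln u <= Rabs a * u). { apply Rle_trans with (Rabs a * ln u).
    apply Rmult_le_compat_r; [lra| apply Rle_abs]. apply Rmult_le_compat_l; [apply Rabs_pos|lra]. }
  assert (y * u <= Rabs y * u). { apply Rmult_le_compat_r; [lra| apply Rle_abs]. }
  assert (0 <= (u - (Rabs a + Rabs y + 1)) ^ 2) by apply pow2_ge_0.
  nra.
Qed.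

Lemma RInt_pow_small a c s : -1 < a -> 0 < s -> s <= 1 ->
  is_RInt (fun u => c * Rpower u a) s 1 (c * (1 - Rpower s (a + 1)) / (a + 1)).
Proof.
  intros Ha Hs Hs1.
  assert (E : c * (1 - Rpower s (a + 1)) / (a + 1) =
     minus ((fun u => c / (a + 1) * Rpower u (a + 1)) 1) ((fun u => c / (a + 1) * Rpower u (a + 1)) s)).
  { simpl. unfold minus, plus, opp; simpl.
    replace (Rpower 1 (a + 1)) with 1 by (unfold Rpower; rewrite ln_1, Rmult_0_r; now rewrite exp_0). field. lra. }
  rewrite E. apply (is_RInt_derive (V:=R_CompleteNormedModule) (fun u => c / (a + 1) * Rpower u (a + 1))).
  - intros x Hx. rewrite Rmin_left in Hx by lra. rewrite Rmax_right in Hx by lra.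
    assert (Hd := Rpower_derive (a + 1) x ltac:(lra)).
    replace (a + 1 - 1) with a in Hd by ring.
    assert (H := is_derive_scal _ x (c / (a + 1)) _ Hd).
    replace (c * Rpower x a) with (c / (a + 1) * ((a + 1) * Rpower x a)) by (field; lra). exact H.
  - intros x Hx. rewrite Rmin_left in Hx by lra. rewrite Rmax_right in Hx by lra.
    apply (ex_derive_continuous (V:=R_NormedModule)). eexists.
    apply is_derive_scal. apply Rpower_derive. lra.
Qed.

Lemma RInt_expm c t : 1 <= t ->
  is_RInt (fun u => c * exp (- u)) 1 t (c * (exp (- 1) - exp (- t))).
Proof.
  intros Ht.
  replace (c * (exp (- 1) - exp (- t))) with
     (minus ((fun u => - c * exp (- u)) t) ((fun u => - c * exp (- u)) 1)).
  2:{ unfold minus, plus, opp; simpl. replace (- (1)) with (-1) by ring. ring. }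
  apply (is_RInt_derive (V:=R_CompleteNormedModule) (fun u => - c * exp (- u))).
  - intros x Hx. auto_derive. auto. ring.
  - intros x Hx. apply (ex_derive_continuous (V:=R_NormedModule)). auto_derive. auto.
Qed.

Lemma exRw a y s t : 0 < s -> 0 < t -> ex_RInt (w a y) s t.
Proof. intros; apply exR; auto. intros; now apply w_cont. Qed.

Lemma RInt_w_nonneg a y s t : 0 < s -> s <= t -> 0 <= RInt (w a y) s t.
Proof. intros. apply RInt_ge_0; auto. apply exRw; lra. intros; left; apply w_pos; lra. Qed.

Lemma w_ex a y : -1 < a -> ex_RInt_gen (w a y) (at_right 0) (Rbar_locally p_infty).
Proof.
  intros Ha.
  set (K := exp ((Rabs a + Rabs y + 1) ^ 2 / 2)).
  apply ex_gen_bounded with (exp (Rabs y) / (a + 1) + K).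
  - intros; now apply w_cont.
  - intros; left; now apply w_pos.
  - intros s t Hs Hst.
    set (s' := Rmin s 1). set (t' := Rmax t 1).
    assert (Hs' : 0 < s' <= s /\ s' <= 1). { unfold s'. split. split. now apply Rmin_case; lra. apply Rmin_l. apply Rmin_r. }
    assert (Ht' : t <= t' /\ 1 <= t'). { unfold t'. split. apply Rmax_l. apply Rmax_r. }
    assert (E1 : RInt (w a y) s' t' = RInt (w a y) s' s + RInt (w a y) s t + RInt (w a y) t t').
    { rewrite <- (RInt_Chasles (w a y) s' t t') by (apply exRw; lra).
      rewrite <- (RInt_Chasles (w a y) s' s t) by (apply exRw; lra).
      unfold plus; simpl; ring. }
    assert (E2 : RInt (w a y) s' t' = RInt (w a y) s' 1 + RInt (w a y) 1 t').
    { rewrite <- (RInt_Chasles (w a y) s' 1 t') by (apply exRw; lra). reflexivity. }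
    pose proof (RInt_w_nonneg a y s' s ltac:(lra) ltac:(lra)).
    pose proof (RInt_w_nonneg a y t t' ltac:(lra) ltac:(lra)).
    assert (B1 : RInt (w a y) s' 1 <= exp (Rabs y) / (a + 1)).
    { pose proof (RInt_pow_small a (exp (Rabs y)) s' Ha ltac:(lra) ltac:(lra)) as HI.
      apply Rle_trans with (RInt (fun u => exp (Rabs y) * Rpower u a) s' 1).
      apply RInt_le. lra. apply exRw; lra. eexists; exact HI.
      intros x Hx. apply w_le_small. lra.
      rewrite (is_RInt_unique _ _ _ _ HI).
      assert (0 < Rpower s' (a + 1)) by (unfold Rpower; apply exp_pos).
      assert (0 < exp (Rabs y)) by apply exp_pos.
      unfold Rdiv. apply Rmult_le_compat_r. left; apply Rinv_0_lt_compat; lra. nra. }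
    assert (B2 : RInt (w a y) 1 t' <= K).
    { pose proof (RInt_expm K t' ltac:(lra)) as HI.
      apply Rle_trans with (RInt (fun u => K * exp (- u)) 1 t').
      apply RInt_le. lra. apply exRw; lra. eexists; exact HI.
      intros x Hx. apply w_le_big. lra.
      rewrite (is_RInt_unique _ _ _ _ HI).
      assert (0 < exp (- t')) by apply exp_pos.
      assert (exp (- 1) <= 1). { rewrite <- exp_0. apply exp_le. lra. }
      assert (0 < K) by apply exp_pos. nra. }
    lra.
Qed.

Definition E (a y : R) : R := RInt_gen (w a y) (at_right 0) (Rbar_locally p_infty).

Lemma w_is a y : -1 < a -> is_RInt_gen (w a y) (at_right 0) (Rbar_locally p_infty) (E a y).
Proof. intros Ha. unfold E. apply (RInt_gen_correct (V:=R_CompleteNormedModule)). now apply w_ex. Qed.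

Lemma gen_unique (f : R -> R) l1 l2 : is_RInt_gen f (at_right 0) (Rbar_locally p_infty) l1 ->
  is_RInt_gen f (at_right 0) (Rbar_locally p_infty) l2 -> l1 = l2.
Proof.
  intros H1 H2. rewrite <- (is_RInt_gen_unique (V:=R_CompleteNormedModule) _ _ H1). now apply (is_RInt_gen_unique (V:=R_CompleteNormedModule)).
Qed.

Lemma ev_pos : filter_prod (at_right 0) (Rbar_locally p_infty)
   (fun ab : R * R => 0 < fst ab /\ fst ab <= snd ab).
Proof.
  apply Filter_prod with (fun a => 0 < a < 1) (fun b => 1 < b).
  - exists (mkposreal 1 Rlt_0_1). intros y Hy Hy0. split; auto.
    unfold ball in Hy; simpl in Hy; unfold AbsRing_ball, abs, minus, plus, opp in Hy; simpl in Hy.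
    apply Rabs_lt_between in Hy. lra.
  - exists 1. auto.
  - intros a b Ha Hb. simpl. lra.
Qed.

Lemma ext_pos (f g : R -> R) l : (forall u, 0 < u -> f u = g u) ->
  is_RInt_gen f (at_right 0) (Rbar_locally p_infty) l ->
  is_RInt_gen g (at_right 0) (Rbar_locally p_infty) l.
Proof.
  intros Hfg. apply is_RInt_gen_ext.
  eapply filter_imp; [|exact ev_pos]. intros [a b] [H1 H2] x [Hx1 Hx2]. simpl in *.
  apply Hfg. rewrite Rmin_left in Hx1 by lra. lra.
Qed.

Lemma gen_le (f g : R -> R) lf lg : (forall u, 0 < u -> Rabs (f u) <= g u) ->
  is_RInt_gen f (at_right 0) (Rbar_locally p_infty) lf ->
  is_RInt_gen g (at_right 0) (Rbar_locally p_infty) lg -> Rabs lf <= lg.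
Proof.
  intros Hfg H1 H2. apply (RInt_gen_norm (V:=R_CompleteNormedModule) (Fa:=at_right 0) (Fb:=Rbar_locally p_infty) f g lf lg).
  - eapply filter_imp; [|exact ev_pos]. intros [a b] [Ha Hb]; simpl in Ha, Hb; simpl; lra.
  - eapply filter_imp; [|exact ev_pos]. intros [a b] [Ha Hb] x Hx; simpl in Ha, Hb, Hx. change (Rabs (f x) <= g x). apply Hfg. lra.
  - exact H1.
  - exact H2.
Qed.

Lemma gen_lin (f g : R -> R) lf lg al be :
  is_RInt_gen f (at_right 0) (Rbar_locally p_infty) lf ->
  is_RInt_gen g (at_right 0) (Rbar_locally p_infty) lg ->
  is_RInt_gen (fun u => al * f u + be * g u) (at_right 0) (Rbar_locally p_infty) (al * lf + be * lg).
Proof.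
  intros H1 H2. 
  pose proof (is_RInt_gen_scal f al lf H1) as H3.
  pose proof (is_RInt_gen_scal g be lg H2) as H4.
  pose proof (is_RInt_gen_plus _ _ _ _ H3 H4) as H5.
  exact H5.
Qed.

Lemma gen_pos (g : R -> R) lg : (forall u, 0 < u -> 0 <= g u) ->
  is_RInt_gen g (at_right 0) (Rbar_locally p_infty) lg -> 0 <= lg.
Proof.
  intros Hg H. assert (H0 := gen_lin g g lg lg 0 0 H H).
  assert (H1 := gen_le _ g _ _ (fun u Hu => eq_ind_r (fun z => z <= g u) (Hg u Hu)
     (eq_trans (f_equal Rabs (eq_trans (f_equal2 Rplus (Rmult_0_l _) (Rmult_0_l _)) (Rplus_0_r 0))) Rabs_R0)) H0 H).
  assert (E0 : 0 * lg + 0 * lg = 0) by ring. rewrite E0, Rabs_R0 in H1. exact H1.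
Qed.

Lemma gen_scal (f : R -> R) l c : is_RInt_gen f (at_right 0) (Rbar_locally p_infty) l ->
  is_RInt_gen (fun u => c * f u) (at_right 0) (Rbar_locally p_infty) (c * l).
Proof. intros H. exact (is_RInt_gen_scal f c l H). Qed.

Lemma exp_ge1 z : 1 + z <= exp z.
Proof. destruct (Req_dec z 0) as [->|H]. rewrite exp_0; lra. left; now apply exp_ineq1. Qed.

Lemma exp_taylor x : 0 <= exp x - 1 - x <= x ^ 2 * exp (Rabs x).
Proof.
  pose proof (exp_ge1 x). pose proof (exp_ge1 (- x)).
  assert (Hm : exp x * exp (- x) = 1) by (rewrite <- exp_plus; replace (x + - x) with 0 by ring; apply exp_0).
  assert (Hp : 0 < exp x) by apply exp_pos. assert (Hq : 0 < exp (- x)) by apply exp_pos.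
  assert (K1 : exp x * (1 - x) <= 1) by nra.
  split. lra.
  destruct (Rle_dec 0 x).
  - rewrite Rabs_right by lra. nra.
  - rewrite Rabs_left by lra. assert (1 <= exp (- x)). { rewrite <- exp_0. apply exp_le. lra. }
    assert (0 <= x ^ 2) by apply pow2_ge_0. nra.
Qed.

Lemma Rpower_S a u : 0 < u -> Rpower u (a + 1) = Rpower u a * u.
Proof. intros Hu. rewrite Rpower_plus, Rpower_1; auto. Qed.

Lemma Rpower_SS a u : 0 < u -> Rpower u (a + 2) = Rpower u a * u ^ 2.
Proof. intros Hu. rewrite Rpower_plus. replace 2 with (INR 2) by (simpl; ring). rewrite Rpower_pow; auto. Qed.

Lemma w_taylor a y h u : 0 < u -> Rabs h <= 1 ->
  Rabs (w a (y + h) u - w a y u - h * w (a + 1) y u) <= h ^ 2 * w (a + 2) (y + 1) u.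
Proof.
  intros Hu Hh. unfold w. rewrite Rpower_S, Rpower_SS by auto.
  set (P := Rpower u a). set (G := exp (y * u - u ^ 2 / 2)).
  assert (HP : 0 < P) by (unfold P, Rpower; apply exp_pos).
  assert (HG : 0 < G) by apply exp_pos.
  replace ((y + h) * u - u ^ 2 / 2) with ((y * u - u ^ 2 / 2) + h * u) by ring.
  replace ((y + 1) * u - u ^ 2 / 2) with ((y * u - u ^ 2 / 2) + u) by ring.
  rewrite !exp_plus. fold G.
  replace (P * (G * exp (h * u)) - P * G - h * (P * u * G)) with (P * G * (exp (h * u) - 1 - h * u)) by ring.
  rewrite Rabs_mult, (Rabs_right (P * G)) by nra.
  destruct (exp_taylor (h * u)) as [T1 T2].
  rewrite Rabs_right by lra.
  assert (exp (Rabs (h * u)) <= exp u).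
  { apply exp_le. rewrite Rabs_mult, (Rabs_right u) by lra. nra. }
  assert (0 <= (h * u) ^ 2) by apply pow2_ge_0.
  apply Rle_trans with (P * G * ((h * u) ^ 2 * exp u)).
  - apply Rmult_le_compat_l. nra. apply Rle_trans with ((h * u) ^ 2 * exp (Rabs (h * u))). lra.
    apply Rmult_le_compat_l; lra.
  - right. ring.
Qed.

Lemma E_taylor a y h : -1 < a -> Rabs h <= 1 ->
  Rabs (E a (y + h) - E a y - h * E (a + 1) y) <= h ^ 2 * E (a + 2) (y + 1).
Proof.
  intros Ha Hh.
  assert (H1 := gen_lin _ _ _ _ 1 (-1) (w_is a (y + h) Ha) (w_is a y Ha)).
  assert (H2 := gen_lin _ _ _ _ 1 (- h) H1 (w_is (a + 1) y ltac:(lra))).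
  assert (H3 := gen_scal _ _ (h ^ 2) (w_is (a + 2) (y + 1) ltac:(lra))).
  assert (Hb : forall u, 0 < u -> Rabs (1 * (1 * w a (y + h) u + -1 * w a y u) + - h * w (a + 1) y u)
     <= h ^ 2 * w (a + 2) (y + 1) u).
  { intros u Hu. replace (1 * (1 * w a (y + h) u + -1 * w a y u) + - h * w (a + 1) y u) with
    (w a (y + h) u - w a y u - h * w (a + 1) y u) by ring.
    now apply w_taylor. }
  assert (H4 := gen_le _ _ _ _ Hb H2 H3).
  replace (E a (y + h) - E a y - h * E (a + 1) y) with
     (1 * (1 * E a (y + h) + -1 * E a y) + - h * E (a + 1) y) by ring.
  exact H4.
Qed.

Lemma E_derive a y : -1 < a -> is_derive (E a) y (E (a + 1) y).
Proof.
  intros Ha. apply is_derive_Reals. intros eps Heps.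
  set (C := E (a + 2) (y + 1)).
  assert (HC : 0 <= C) by (apply (gen_pos (w (a + 2) (y + 1))); [intros; left; now apply w_pos | apply w_is; lra]).
  assert (Hd : 0 < Rmin 1 (eps / (C + 1))).
  { apply Rmin_case. lra. apply Rdiv_lt_0_compat; lra. }
  exists (mkposreal _ Hd). intros h Hh0 Hh. simpl in Hh.
  assert (Hh1 : Rabs h <= 1) by (left; eapply Rlt_le_trans; [exact Hh| apply Rmin_l]).
  assert (Hh2 : Rabs h < eps / (C + 1)) by (eapply Rlt_le_trans; [exact Hh| apply Rmin_r]).
  pose proof (E_taylor a y h Ha Hh1) as T. fold C in T.
  replace ((E a (y + h) - E a y) / h - E (a + 1) y) with ((E a (y + h) - E a y - h * E (a + 1) y) / h)
    by (field; auto).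
  unfold Rdiv. rewrite Rabs_mult, Rabs_inv.
  assert (Habs : 0 < Rabs h) by (apply Rabs_pos_lt; auto).
  apply Rle_lt_trans with (h ^ 2 * C * / Rabs h).
  apply Rmult_le_compat_r. left; now apply Rinv_0_lt_compat. exact T.
  replace (h ^ 2) with (Rabs h * Rabs h) by (rewrite <- Rabs_mult; rewrite Rabs_right; [ring| nra]).
  replace (Rabs h * Rabs h * C * / Rabs h) with (Rabs h * C) by (field; lra).
  apply (Rmult_lt_compat_r (C + 1)) in Hh2; [|lra].
  unfold Rdiv in Hh2. rewrite Rmult_assoc, Rinv_l, Rmult_1_r in Hh2 by lra.
  nra.
Qed.

Lemma loc_pos x : 0 < x -> locally x (fun t => 0 < t).
Proof.
  intros Hx. exists (mkposreal x Hx). intros t Ht.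
  unfold ball in Ht; simpl in Ht; unfold AbsRing_ball, abs, minus, plus, opp in Ht; simpl in Ht.
  apply Rabs_lt_between in Ht. lra.
Qed.

Definition gibp q y x := q * w (q - 1) y x + y * w q y x - w (q + 1) y x.

Lemma Derive_w q y x : 0 < x -> Derive (w q y) x = gibp q y x.
Proof.
  intros Hx. rewrite (is_derive_unique _ _ _ (w_derive q y x Hx)). unfold gibp, w.
  rewrite (Rpower_S q x Hx).
  assert (Hq : Rpower x q = Rpower x (q - 1) * x)
    by (rewrite <- Rpower_S by auto; f_equal; ring).
  rewrite !Hq. ring.
Qed.

Lemma ex_derive_w a y x : 0 < x -> ex_derive (w a y) x.
Proof. intros Hx. eexists. now apply w_derive. Qed.

Lemma gibp_cont q y x : 0 < x -> continuous (gibp q y) x.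
Proof.
  intros Hx. apply (ex_derive_continuous (V:=R_NormedModule)). unfold gibp.
  apply (ex_derive_minus (fun x => q * w (q - 1) y x + y * w q y x) (w (q + 1) y)).
  apply (ex_derive_plus (fun x => q * w (q - 1) y x) (fun x => y * w q y x)).
  apply ex_derive_scal, ex_derive_w; auto.
  apply ex_derive_scal, ex_derive_w; auto.
  apply ex_derive_w; auto.
Qed.

Lemma lim_w0 q y : 0 < q -> filterlim (w q y) (at_right 0) (locally 0).
Proof.
  intros Hq. apply filterlim_locally. intros [eps He].
  set (c := exp (Rabs y)). assert (Hc : 0 < c) by apply exp_pos.
  set (d' := Rpower (eps / c) (/ q)).
  assert (Hd' : 0 < d') by (unfold d', Rpower; apply exp_pos).
  assert (Hd : 0 < Rmin 1 d') by (apply Rmin_case; lra).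
  exists (mkposreal _ Hd). intros u Hu Hu0. simpl in Hu.
  unfold ball in Hu; simpl in Hu; unfold AbsRing_ball, abs, minus, plus, opp in Hu; simpl in Hu.
  apply Rabs_lt_between in Hu. rewrite Ropp_0, !Rplus_0_r in Hu.
  assert (u < 1) by (eapply Rlt_le_trans; [apply Hu| apply Rmin_l]).
  assert (u < d') by (eapply Rlt_le_trans; [apply Hu| apply Rmin_r]).
  unfold ball; simpl; unfold AbsRing_ball, abs, minus, plus, opp; simpl.
  rewrite Ropp_0, Rplus_0_r. rewrite Rabs_right by (left; now apply w_pos).
  apply Rle_lt_trans with (c * Rpower u q). apply w_le_small; lra.
  assert (Rpower u q < eps / c).
  { replace (eps / c) with (Rpower d' q).
    unfold Rpower. apply exp_increasing. apply Rmult_lt_compat_l; auto. apply ln_increasing; lra.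
    unfold d'. rewrite Rpower_mult. rewrite Rinv_l by lra. apply Rpower_1. apply Rdiv_lt_0_compat; lra. }
  apply (Rmult_lt_compat_l c) in H1; auto. unfold Rdiv in H1.
  rewrite (Rmult_comm eps), <- Rmult_assoc, Rinv_r, Rmult_1_l in H1 by lra. exact H1.
Qed.

Lemma lim_winf q y : filterlim (w q y) (Rbar_locally p_infty) (locally 0).
Proof.
  apply filterlim_locally. intros [eps He].
  set (K := exp ((Rabs q + Rabs y + 1) ^ 2 / 2)). assert (HK : 0 < K) by apply exp_pos.
  exists (Rmax 1 (- ln (eps / K))). intros u Hu.
  assert (1 < u) by (eapply Rle_lt_trans; [apply Rmax_l| exact Hu]).
  assert (- ln (eps / K) < u) by (eapply Rle_lt_trans; [apply Rmax_r| exact Hu]).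
  unfold ball; simpl; unfold AbsRing_ball, abs, minus, plus, opp; simpl.
  rewrite Ropp_0, Rplus_0_r. rewrite Rabs_right by (left; apply w_pos; lra).
  apply Rle_lt_trans with (K * exp (- u)). apply w_le_big; lra.
  assert (exp (- u) < eps / K).
  { rewrite <- (exp_ln (eps / K)) by (apply Rdiv_lt_0_compat; lra). apply exp_increasing. lra. }
  apply (Rmult_lt_compat_l K) in H1; auto. unfold Rdiv in H1.
  rewrite (Rmult_comm eps), <- Rmult_assoc, Rinv_r, Rmult_1_l in H1 by lra. exact H1.
Qed.

Lemma E_ibp q y : 0 < q -> q * E (q - 1) y + y * E q y - E (q + 1) y = 0.
Proof.
  intros Hq.
  assert (H1 : is_RInt_gen (Derive (w q y)) (at_right 0) (Rbar_locally p_infty) (0 - 0)).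
  { apply (is_RInt_gen_Derive (Fa:=at_right 0) (Fb:=Rbar_locally p_infty)).
    - eapply filter_imp; [|exact ev_pos]. intros [a b] [Ha Hb] x Hx; simpl in Ha, Hb, Hx.
      rewrite Rmin_left in Hx by lra. apply ex_derive_w. lra.
    - eapply filter_imp; [|exact ev_pos]. intros [a b] [Ha Hb] x Hx; simpl in Ha, Hb, Hx.
      rewrite Rmin_left in Hx by lra.
      apply (continuous_ext_loc (T:=R_UniformSpace) (U:=R_UniformSpace) (Derive (w q y)) (gibp q y) x).
      eapply filter_imp; [|exact (loc_pos x ltac:(lra))]. intros t Ht. simpl. symmetry. now apply Derive_w.
      apply gibp_cont. lra.
    - now apply lim_w0.
    - apply lim_winf. }
  apply (ext_pos _ (gibp q y)) in H1. 2:{ intros; now apply Derive_w. }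
  assert (H2 := gen_lin _ _ _ _ q y (w_is (q - 1) y ltac:(lra)) (w_is q y ltac:(lra))).
  assert (H3 := gen_lin _ _ _ _ 1 (-1) H2 (w_is (q + 1) y ltac:(lra))).
  apply (ext_pos _ (gibp q y)) in H3. 2:{ intros; unfold gibp; ring. }
  pose proof (gen_unique _ _ _ H3 H1) as HH.
  replace (q * E (q - 1) y + y * E q y - E (q + 1) y) with
    (1 * (q * E (q - 1) y + y * E q y) + -1 * E (q + 1) y) by ring.
  rewrite HH. ring.
Qed.

Lemma FGq_E q y : FGq q y = E (q - 1) y + E (q - 1) (- y).
Proof. reflexivity. Qed.

Lemma Derive_FGq q D : 0 < q -> Derive (FGq q) D = E q D - E q (- D).
Proof.
  intros Hq.
  assert (HdE : forall y, is_derive (E (q - 1)) y (E q y)).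
  { intros y. assert (H := E_derive (q - 1) y ltac:(lra)). replace (q - 1 + 1) with q in H by ring. exact H. }
  apply is_derive_unique.
  cut (is_derive (fun y => E (q - 1) y + E (q - 1) (- y)) D (E q D - E q (- D))).
  { intros HD. exact (is_derive_ext _ _ _ _ (fun t => eq_sym (FGq_E q t)) HD). }
  assert (H2 : is_derive (fun y => E (q - 1) (- y)) D (-1 * E q (- D))).
  { assert (H : is_derive (fun x : R => - x) D (-1)). { auto_derive. exact I. lra. }
    exact (is_derive_comp (E (q - 1)) (fun x => - x) D _ _ (HdE (- D)) H). }
  replace (E q D - E q (- D)) with (E q D + -1 * E q (- D)) by ring.
  exact (is_derive_plus (E (q - 1)) (fun y => E (q - 1) (- y)) D _ _ (HdE D) H2).
Qed.

Lemma w_expand a y u : 0 < u -> w a y u = Rpower u a * exp (y * u) * exp (- (u ^ 2 / 2)).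
Proof. intros Hu. unfold w. replace (y * u - u ^ 2 / 2) with (y * u + - (u ^ 2 / 2)) by ring. rewrite exp_plus. ring. Qed.

Theorem lemma2p3 (q Dstar : R) (hq : 0 < q) (hD : 0 < Dstar)
  (hroot : is_root_eq q Dstar)
  (huniq : forall D : R, 0 < D -> is_root_eq q D -> D = Dstar) :
  sqrt (Rmax ((q - 1) / 2) 0) <= Dstar.
Proof.
  set (D := Dstar) in *.
  unfold is_root_eq in hroot. rewrite Derive_FGq, FGq_E in hroot by auto.
  set (A := E (q - 1) D + E (q - 1) (- D)) in *.
  set (B := E q D - E q (- D)) in *.
  set (C := E (q + 1) D + E (q + 1) (- D)).
  assert (HA := gen_lin _ _ _ _ 1 1 (w_is (q - 1) D ltac:(lra)) (w_is (q - 1) (- D) ltac:(lra))).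
  assert (HB := gen_lin _ _ _ _ 1 (-1) (w_is q D ltac:(lra)) (w_is q (- D) ltac:(lra))).
  assert (HC := gen_lin _ _ _ _ 1 1 (w_is (q + 1) D ltac:(lra)) (w_is (q + 1) (- D) ltac:(lra))).
  set (lam := q / D).
  assert (Hlam : 0 < lam) by (apply Rdiv_lt_0_compat; auto).
  assert (HABC := gen_lin _ _ _ _ 1 1 (gen_lin _ _ _ _ (lam ^ 2) (- 2 * lam) HA HB) HC).
  apply gen_pos in HABC.
  2:{ intros u Hu. rewrite !w_expand by auto.
      replace (Rpower u q) with (Rpower u (q - 1) * u) by (rewrite <- Rpower_S by auto; f_equal; ring).
      replace (Rpower u (q + 1)) with (Rpower u (q - 1) * u ^ 2) by (rewrite <- Rpower_SS by auto; f_equal; ring).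
      set (p := Rpower u (q - 1)). set (G := exp (- (u ^ 2 / 2))).
      set (X := exp (D * u)). set (Y := exp (- D * u)).
      assert (0 < p) by (unfold p, Rpower; apply exp_pos).
      assert (0 < G) by apply exp_pos. assert (0 < X) by apply exp_pos. assert (0 < Y) by apply exp_pos.
      assert (0 <= (lam - u) ^ 2 * (X + Y)) by (apply Rmult_le_pos; [apply pow2_ge_0| lra]).
      assert (0 <= lam * u * Y) by (apply Rmult_le_pos; [nra| lra]).
      replace (1 * (lam ^ 2 * (1 * (p * X * G) + 1 * (p * Y * G)) +
          - 2 * lam * (1 * (p * u * X * G) + -1 * (p * u * Y * G))) +
          1 * (1 * (p * u ^ 2 * X * G) + 1 * (p * u ^ 2 * Y * G)))
        with (p * G * ((lam - u) ^ 2 * (X + Y) + 4 * (lam * u * Y))) by ring.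
      apply Rmult_le_pos; [nra| lra]. }
  assert (HApos : 0 <= A).
  { apply (gen_pos _ _ (fun u Hu => Rplus_le_le_0_compat _ _
       (Rmult_le_pos _ _ Rle_0_1 (Rlt_le _ _ (w_pos (q - 1) D u Hu)))
       (Rmult_le_pos _ _ Rle_0_1 (Rlt_le _ _ (w_pos (q - 1) (- D) u Hu))))) in HA.
    replace A with (1 * E (q - 1) D + 1 * E (q - 1) (- D)) by (unfold A; ring). exact HA. }
  assert (HA0 : A <> 0).
  { intro H0. rewrite H0 in hroot. unfold Rdiv in hroot. rewrite Rinv_0, Rmult_0_r in hroot. lra. }
  assert (HAp : 0 < A) by lra.
  assert (Hroot : q * A = D * B).
  { apply (Rmult_eq_compat_r A) in hroot. unfold Rdiv in hroot.
    replace ((q - D * B * / A) * A) with (q * A - D * B) in hroot by (field; auto). lra. }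
  pose proof (E_ibp q D hq) as I1. pose proof (E_ibp q (- D) hq) as I2.
  assert (HCv : C = 2 * q * A).
  { unfold C. replace (E (q + 1) D) with (q * E (q - 1) D + D * E q D) by lra.
    replace (E (q + 1) (- D)) with (q * E (q - 1) (- D) + - D * E q (- D)) by lra.
    rewrite <- (Rplus_0_l (2 * q * A)). rewrite Rmult_assoc. unfold A. 
    replace B with (E q D - E q (- D)) in Hroot by reflexivity. unfold A in Hroot. nra. }
  assert (HP : 0 <= lam ^ 2 * A - 2 * lam * B + C).
  { replace (lam ^ 2 * A - 2 * lam * B + C) with
      (1 * (lam ^ 2 * (1 * E (q - 1) D + 1 * E (q - 1) (- D)) + - 2 * lam * (1 * E q D + -1 * E q (- D))) +
       1 * (1 * E (q + 1) D + 1 * E (q + 1) (- D))) by (unfold A, B, C; ring). exact HABC. }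
  assert (HBv : B = lam * A) by (unfold lam; apply (Rmult_eq_reg_l D); [ | lra]; field_simplify; [lra | lra]).
  rewrite HCv, HBv in HP.
  assert (HPq : 0 <= A * (2 * q - lam ^ 2)) by (ring_simplify; ring_simplify in HP; lra).
  assert (Hl : lam ^ 2 <= 2 * q).
  { apply Rmult_le_reg_l with A; auto. nra. }
  unfold lam in Hl. unfold Rdiv in Hl. rewrite Rpow_mult_distr, pow_inv in Hl.
  assert (HD2 : q / 2 <= D ^ 2).
  { assert (0 < D ^ 2) by (apply pow_lt; auto).
    apply (Rmult_le_compat_r (D ^ 2)) in Hl; [|lra].
    rewrite Rmult_assoc, Rinv_l, Rmult_1_r in Hl by lra. nra. }
  rewrite <- (sqrt_pow2 D) by lra.
  apply sqrt_le_1_alt. apply Rmax_lub; lra.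
Qed.
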